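(* Let $p$ be an odd prime and let $\nu$ and $l$ be positive integers. If $2^{\nu+1}\nmid(p^l+1)$, then \[t(2^{\nu+1},p^l):=\frac{\phi(2^{\nu+1})}{2\operatorname{ord}_{2^{\nu+1}}(p^{l})}=\gcd(2^{\nu-1},\alpha_p l).\] In particular, if $p=5$, then $t(2^{\nu+1},5^l)=\gcd(2^{\nu-1},l)$.
   Context: $\phi$ is Euler's totient function and $\operatorname{ord}_m(x)$ is the multiplicative order of $x$ modulo $m$. For an odd prime $p$ and $\nu\geq1$, $\alpha_p$ denotes the unique integer in $\{0,1,\dots,2^{\nu-1}-1\}$ such that $p\equiv 5^{\alpha_p}\pmod{2^{\nu+1}}$ if $p\equiv1\pmod 4$, and $p\equiv -5^{\alpha_p}\pmod{2^{\nu+1}}$ if $p\equiv 3\pmod 4$ (so $\alpha_p=0$ when $\nu=1$). *)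

(* Defs.v *)
From mathcomp Require Import all_boot all_algebra.
Set Implicit Arguments. Unset Strict Implicit. Unset Printing Implicit Defensive.
Import GRing.Theory Num.Theory.

(* Multiplicative order of x modulo m: the least k > 0 with x^k = 1 (mod m).
   Computed as the first k in 0..m satisfying this (for coprime x, m >= 1
   the order is <= totient m <= m, so the search range suffices).  *)
Definition ord_mod (m x : nat) : nat :=
  find (fun k => (0 < k) && (x ^ k == 1 %[mod m])) (iota 0 m.+1).

(* alpha_p (depending on nu): the unique a in {0,..,2^(nu-1)-1} with
   p = 5^a (mod 2^(nu+1)) if p = 1 (mod 4), and p = -5^a (mod 2^(nu+1))
   (i.e. p + 5^a = 0 (mod 2^(nu+1))) if p = 3 (mod 4). *)
Definition alpha_cond (nu p a : nat) : bool :=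
  if p %% 4 == 1 then p == 5 ^ a %[mod 2 ^ nu.+1]
  else p + 5 ^ a == 0 %[mod 2 ^ nu.+1].

Definition alpha (nu p : nat) : nat :=
  find (alpha_cond nu p) (iota 0 (2 ^ nu.-1)).

Definition t_val (m q : nat) : rat :=
  ((totient m)%:R / (2 * ord_mod m q)%N%:R)%R.

(* Main.v *)
Require Import Defs.
From mathcomp Require Import all_boot all_algebra.
From mathcomp Require Import zify.
Import GRing.Theory Num.Theory.

Lemma pow_lin d o : exists t, (1 + d) ^ o = 1 + o * d + d * d * t.
Proof.
elim: o => [|o [t Ht]]; first by exists 0; rewrite expn0 !muln0 mul0n.
exists (o + t + t * d); rewrite expnSr Ht; nia.
Qed.

Lemma pow5 j : exists u, odd u /\ 5 ^ (2 ^ j) = 1 + 2 ^ j.+2 * u.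
Proof.
elim: j => [|j [u [ou Hu]]]; first by exists 1.
exists (u + 2 ^ j.+1 * (u * u)); split.
  by rewrite oddD oddM oddX /= ou.
rewrite expnS mulnC expnM Hu !expnS; nia.
Qed.

Lemma dec2 n : 0 < n -> exists j q, odd q /\ n = 2 ^ j * q.
Proof.
move=> n0; have [m cm ->] := pfactor_coprime (isT : prime 2) n0.
by exists (logn 2 n), m; rewrite -coprime2n mulnC.
Qed.

Lemma five_iff nu n : 0 < nu -> (5 ^ n == 1 %[mod 2 ^ nu.+1]) = (2 ^ nu.-1 %| n).
Proof.
move=> nu0; apply/idP/idP => [H|/dvdnP [q ->]]; last first.
  have [u [_ Hu]] := pow5 nu.-1.
  rewrite mulnC expnM Hu; have [t ->] := pow_lin (2 ^ nu.-1.+2 * u) q.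
  rewrite prednK //.
  apply/eqP; rewrite -addnA.
  have -> : q * (2 ^ nu.+1 * u) + 2 ^ nu.+1 * u * (2 ^ nu.+1 * u) * t
     = (q * u + u * (2 ^ nu.+1 * u) * t) * 2 ^ nu.+1 by nia.
  by rewrite addnC modnMDl.
have [->|n0] := posnP n; first exact: dvdn0.
have [j [q [oq En]]] := dec2 _ n0; rewrite En in H *.
have [le|lt] := leqP nu.-1 j; first by apply: dvdn_mulr; apply: dvdn_exp2l.
exfalso.
have [u [ou Hu]] := pow5 j.
move: H; rewrite expnM Hu; have [t ->] := pow_lin (2 ^ j.+2 * u) q.
have dv : 2 ^ j.+3 %| 2 ^ nu.+1 by apply: dvdn_exp2l; lia.
move/eqP => H; have := congr1 (modn^~ (2 ^ j.+3)) H.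
rewrite !modn_dvdm //.
have ow : odd (q * u + 2 ^ j.+2 * u * u * t).
  have ow' D : ~~ odd D -> odd (q * u + D * u * u * t).
    by move=> /negbTE De; rewrite oddD !oddM De oq ou.
  by apply: ow'; rewrite oddX.


have := odd_double_half (q * u + 2 ^ j.+2 * u * u * t); rewrite ow.
set w := (_ ./2) => Hw.
have -> : 1 + q * (2 ^ j.+2 * u) + 2 ^ j.+2 * u * (2 ^ j.+2 * u) * t
   = w * 2 ^ j.+3 + (1 + 2 ^ j.+2).
  rewrite (expnS 2 j.+2); move: Hw; set D := 2 ^ j.+2; rewrite -muln2 => Hw.
  have -> : D * u * (D * u) * t = D * (D * u * u * t) by rewrite !mulnA; nia.
  rewrite mulnA (mulnC q D) -mulnA -addnA -mulnDr -Hw; lia.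
rewrite modnMDl !modn_small; first lia.
  by rewrite (ltn_exp2l 0 j.+3).
rewrite !expnS; have := expn_gt0 2 j; lia.
Qed.

Lemma gauss K b k : 0 < K -> (K %| b * k) = (K %/ gcdn K b %| k).
Proof.
move=> K0; set g := gcdn K b.
have g0 : 0 < g by rewrite gcdn_gt0 K0.
have eK : K = K %/ g * g by rewrite divnK // dvdn_gcdl.
have eb : b = b %/ g * g by rewrite divnK // dvdn_gcdr.
have cop : coprime (K %/ g) (b %/ g).
  rewrite /coprime; apply/eqP.
  have : g = gcdn (K %/ g) (b %/ g) * g by rewrite muln_gcdl -eK -eb.
  by move/eqP; rewrite -{1}(mul1n g) eqn_pmul2r // eq_sym => /eqP.
rewrite {1}eK {1}eb mulnAC dvdn_pmul2r //.
by rewrite Gauss_dvdr.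
Qed.

Lemma ord_char m x d : 0 < d -> d <= m ->
  (forall k, (x ^ k == 1 %[mod m]) = (d %| k)) -> ord_mod m x = d.
Proof.
move=> d0 dm H; rewrite /ord_mod.
set P := (fun k => _).
have Pd : P d by rewrite /P d0 H dvdnn.
have sz : size (iota 0 m.+1) = m.+1 by rewrite size_iota.
set f := find P (iota 0 m.+1).
have [lt|ge] := ltnP f d.
  have hs : has P (iota 0 m.+1) by rewrite has_find sz; lia.
  have := nth_find 0 hs; rewrite nth_iota; last by lia.
  rewrite add0n => /andP [f0]; rewrite H => fd; have := dvdn_leq f0 fd; lia.
rewrite leq_eqVlt in ge; case/orP: ge => [/eqP //|lt].
have := before_find 0 lt; rewrite nth_iota; last by lia.
by rewrite add0n Pd.
Qed.

Lemma cong_of E A B s x y : x = A * E + s -> y = B * E + s -> x = y %[mod E].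
Proof. by move=> -> ->; rewrite !modnMDl. Qed.


Lemma ar0 y D u v : y * u = 1 + v * 2 -> y * (1 + D * u) = y + D + v * (D * 2).
Proof. move=> H. rewrite mulnDr muln1 mulnCA H; nia. Qed.
Lemma ar1 h D r : (1 + h * 2) * D + r = h * (D * 2) + (D + r).
Proof. nia. Qed.
Lemma ar2 h v D r : (0 + h * 2) * D + r + D + v * (D * 2) = (h + v) * (D * 2) + (D + r).
Proof. nia. Qed.
Lemma ar3 h v D r : (1 + h * 2) * D + r + D + v * (D * 2) = (h + v + 1) * (D * 2) + r.
Proof. nia. Qed.
Lemma ar4 h D r : (0 + h * 2) * D + r = h * (D * 2) + r.
Proof. nia. Qed.

Lemma exists5 n x : x %% 4 = 1 -> exists2 a, a < 2 ^ n & x = 5 ^ a %[mod 2 ^ n.+2].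
Proof.
move=> x4; elim: n => [|n [a alt Ha]]; first by exists 0 => //; rewrite expn0 x4.
set D := 2 ^ n.+2.
have D2 : 2 ^ n.+3 = D * 2 by rewrite expnS mulnC.
set y := 5 ^ a.
have [u [ou Hu]] := pow5 n.
have oy : odd y by rewrite /y oddX orbT.
have := odd_double_half (y * u); rewrite oddM oy ou -muln2; set v := _./2 => Hv.
have Hy' : 5 ^ (a + 2 ^ n) = y + D + v * (D * 2).
  by rewrite expnD Hu -/y -/D; apply: ar0; rewrite -Hv.
have ex := divn_eq x D; have ey := divn_eq y D.
have rr : x %% D = y %% D := Ha.
set c1 := x %/ D in ex; set c2 := y %/ D in ey.
have e1 := odd_double_half c1; have e2 := odd_double_half c2.
rewrite -!muln2 in e1 e2.
rewrite D2.
case o1: (odd c1) in e1; case o2: (odd c2) in e2.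
- exists a; first by rewrite expnS; lia.
  apply: (cong_of _ (c1./2) (c2./2) (D + x %% D)).
    by rewrite {1}ex -{1}e1; exact: ar1.
  by rewrite -/y {1}ey -{1}e2 -rr; exact: ar1.
- exists (a + 2 ^ n); first by rewrite expnS; lia.
  apply: (cong_of _ (c1./2) (c2./2 + v) (D + x %% D)).
    by rewrite {1}ex -{1}e1; exact: ar1.
  by rewrite Hy' {1}ey -{1}e2 -rr; exact: ar2.
- exists (a + 2 ^ n); first by rewrite expnS; lia.
  apply: (cong_of _ (c1./2) (c2./2 + v + 1) (x %% D)).
    by rewrite {1}ex -{1}e1; exact: ar4.
  by rewrite Hy' {1}ey -{1}e2 -rr; exact: ar3.
- exists a; first by rewrite expnS; lia.
  apply: (cong_of _ (c1./2) (c2./2) (x %% D)).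
    by rewrite {1}ex -{1}e1; exact: ar4.
  by rewrite -/y {1}ey -{1}e2 -rr; exact: ar4.
Qed.

Lemma negpow M p c : p + c = 0 %[mod M] -> forall n,
  if odd n then p ^ n + c ^ n = 0 %[mod M] else p ^ n = c ^ n %[mod M].
Proof.
move=> H.
have Hp : p * (p + c) = 0 %[mod M] by rewrite -modnMmr H !mod0n muln0 mod0n.
have Hc : c * (p + c) = 0 %[mod M] by rewrite -modnMmr H !mod0n muln0 mod0n.
have sq : p ^ 2 = c ^ 2 %[mod M].
  apply/eqP; rewrite -(eqn_modDr (p * c)).
  have -> : p ^ 2 + p * c = p * (p + c) by rewrite mulnDr (expnS _ 1) expn1.
  have -> : c ^ 2 + p * c = c * (p + c) by rewrite mulnDr (expnS _ 1) expn1 (mulnC p) addnC.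
  by rewrite Hp Hc.
have sqk k : (p ^ 2) ^ k = (c ^ 2) ^ k %[mod M] by rewrite -modnXm sq modnXm.
move=> n; have := odd_double_half n; set k := n./2; rewrite -muln2.
case: (odd n) => /= <-.
- rewrite add1n (mulnC k) !expnS !expnM.
  have E : p * (p ^ 2) ^ k = p * (c ^ 2) ^ k %[mod M] by rewrite -modnMmr sqk modnMmr.
  by rewrite -modnDml E modnDml -mulnDl -modnMml H modnMml mul0n.
- by rewrite add0n (mulnC k) !expnM.
Qed.

Lemma alpha_spec nu p : 0 < nu -> odd p -> alpha_cond nu p (alpha nu p).
Proof.
move=> nu0 op.
have ex : has (alpha_cond nu p) (iota 0 (2 ^ nu.-1)).
  suff [a alt Ha] : exists2 a, a < 2 ^ nu.-1 & alpha_cond nu p a.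
    by apply/hasP; exists a => //; rewrite mem_iota.
  case: nu nu0 => // n _ /=.
  rewrite /alpha_cond; have [p4|p4] := eqVneq (p %% 4) 1.
    have [a alt Ha] := exists5 n p p4; exists a => //; rewrite ?p4 ?eqxx; exact/eqP.
  rewrite ?(negbTE p4).
  have p2 : p %% 2 = 1 by rewrite modn2 op.
  have p3 : p %% 4 = 3.
    have : p %% 4 %% 2 = 1 by rewrite modn_dvdm.
    have : p %% 4 < 4 by rewrite ltn_mod.
    move: p4; lia.
  set s := p %/ 4; have ep : p = s * 4 + 3 by rewrite {1}(divn_eq p 4) p3.
  set Q := 2 ^ n.
  have Q0 : 0 < Q by rewrite expn_gt0.
  have Qp : p <= Q * p by rewrite leq_pmull.
  set x := 4 * (Q * p - s - 1) + 1.
  have x4 : x %% 4 = 1 by rewrite /x mulnC modnMDl.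
  have [a alt Ha] := exists5 n x x4.
  exists a => //; apply/eqP.
  rewrite -modnDmr -Ha modnDmr.
  have -> : p + x = Q * p * 4 by rewrite /x; lia.
  have -> : 2 ^ n.+2 = Q * 4 by rewrite !expnS /Q; lia.
  by rewrite [Q * p]mulnC -mulnA modnMl mod0n.
have := nth_find 0 ex; rewrite nth_iota ?add0n //.
by move: ex; rewrite has_find size_iota.
Qed.

Lemma Gk nu x b k : 0 < nu -> x ^ k = 5 ^ (b * k) %[mod 2 ^ nu.+1] ->
  (x ^ k == 1 %[mod 2 ^ nu.+1]) = (2 ^ nu.-1 %/ gcdn (2 ^ nu.-1) b %| k).
Proof. by move=> nu0 H; rewrite H five_iff // gauss ?expn_gt0. Qed.

Lemma dpos nu b : 0 < 2 ^ nu.-1 %/ gcdn (2 ^ nu.-1) b /\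
   2 ^ nu.-1 %/ gcdn (2 ^ nu.-1) b <= 2 ^ nu.+1.
Proof.
have K0 : 0 < 2 ^ nu.-1 by rewrite expn_gt0.
split.
  rewrite divn_gt0 ?gcdn_gt0 ?K0 //; apply: dvdn_leq => //; exact: dvdn_gcdl.
apply: leq_trans (leq_div _ _) _; apply: leq_pexp2l => //; lia.
Qed.

Lemma tval nu x g : 0 < nu -> g %| 2 ^ nu.-1 ->
  ord_mod (2 ^ nu.+1) x = 2 ^ nu.-1 %/ g -> t_val (2 ^ nu.+1) x = (g%:R : rat)%R.
Proof.
move=> nu0 gK ho; rewrite /t_val ho totient_pfactor //= mul1n.
have g0 : 0 < g by apply: dvdn_gt0 gK; rewrite expn_gt0.
have -> : 2 ^ nu = g * (2 * (2 ^ nu.-1 %/ g)).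
  by rewrite mulnCA (mulnC g) (divnK gK) -expnS prednK.
rewrite natrM GRing.mulfK // pnatr_eq0 -lt0n muln_gt0 /=.
by have [] := dpos nu g; rewrite gcdnC (gcdn_idPl gK) //.
Qed.


Lemma not_dvd4 nu Y : 0 < nu -> Y %% 4 = 1 -> ~~ (1 + Y == 0 %[mod 2 ^ nu.+1]).
Proof.
move=> nu0 Y4; apply/negP => /eqP Hs.
have d4 : 4 %| 2 ^ nu.+1 by apply: (@dvdn_exp2l 2 2); lia.
have := congr1 (modn^~ 4) Hs; rewrite /= !modn_dvdm //.
by rewrite -modnDmr Y4.
Qed.

Lemma pow5mod4 n : (5 ^ n) %% 4 = 1.
Proof. by rewrite -modnXm /= exp1n. Qed.

Theorem corollary3p10 :
  (forall (p nu l : nat), prime p -> odd p -> 0 < nu -> 0 < l ->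
     ~~ (2 ^ nu.+1 %| p ^ l + 1) ->
     t_val (2 ^ nu.+1) (p ^ l) = ((gcdn (2 ^ nu.-1) (alpha nu p * l))%:R : rat)%R)
  /\
  (forall (nu l : nat), 0 < nu -> 0 < l ->
     t_val (2 ^ nu.+1) (5 ^ l) = ((gcdn (2 ^ nu.-1) l)%:R : rat)%R).
Proof.
split; last first.
  move=> nu l nu0 l0; apply: tval => //; first exact: dvdn_gcdl.
  have [d0 dM] := dpos nu l.
  apply: ord_char => // k; apply: Gk => //; by rewrite expnM.
move=> p nu l pp op nu0 l0 ndiv.
have As := alpha_spec _ _ nu0 op; set a := alpha nu p in As *.
apply: tval => //; first exact: dvdn_gcdl.
have [d0 dM] := dpos nu (a * l).
apply: ord_char => // k.
rewrite /alpha_cond in As; case: ifP As => p4 As.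
  apply: Gk => //; rewrite -expnM -modnXm (eqP As) modnXm -expnM mulnA //.
have N := negpow _ _ _ (eqP As).
case: (boolP (odd l)) => ol; last first.
  apply: Gk => //; rewrite -expnM; have := N (l * k); rewrite oddM (negbTE ol) /= => ->.
  by rewrite -expnM mulnA.
case: (boolP (odd k)) => ok; last first.
  apply: Gk => //; rewrite -expnM; have := N (l * k); rewrite oddM (negbTE ok) andbF /= => ->.
  by rewrite -expnM mulnA.
set K := 2 ^ nu.-1; set g := gcdn K (a * l).
have gK : g %| K by exact: dvdn_gcdl.
have rhs : ~~ (K %/ g %| k).
  have d1 : K %/ g != 1.
    apply/eqP => d1.
    have gE : g = K by rewrite -[RHS](divnK gK) d1 mul1n.
    have Kal : K %| a * l by rewrite -gE dvdn_gcdr.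
    have f1 : 5 ^ (a * l) == 1 %[mod 2 ^ nu.+1] by rewrite five_iff.
    have := N l; rewrite ol -expnM => Hs.
    move: ndiv; rewrite /dvdn; apply/negP/negPn.
    by rewrite -modnDmr -(eqP f1) modnDmr Hs mod0n.
  have /(dvdn_pfactor _ _ (isT : prime 2)) [m _ em] : K %/ g %| 2 ^ nu.-1 := dvdn_div gK.
  apply/negP => dk.
  have m0 : 0 < m by move: d1; rewrite em; case: m {em}.
  have : 2 %| k.
    apply: dvdn_trans dk; rewrite em; case: m m0 {em} => // m _.
    by rewrite expnS dvdn_mulr.
  by rewrite dvdn2 ok.
rewrite (negbTE rhs); apply/negbTE.
have := N (l * k); rewrite oddM ol ok /= => Hs.
apply/negP => /eqP H1; rewrite -expnM in H1; move: Hs.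
rewrite -modnDml H1 modnDml -expnM => /eqP.
by apply/negP; apply: not_dvd4 => //; exact: pow5mod4.
Qed.
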